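(* Let $\mathcal{H}$ be a supersolvable arrangement of rank $n\ge3$ with decomposition $\mathcal{H}=\mathcal{H}_0\sqcup\mathcal{H}_1$ as in the definition of supersolvability. Then the graph of regions $G(\mathcal{H})$ is isomorphic to a graph that is $\ell$-suspended over $G(\mathcal{H}_0)$, where $\ell:=|\mathcal{H}_1|$.
   Context: A hyperplane arrangement is a finite set of linear hyperplanes in $\mathbb{R}^d$; its rank is the dimension of the span of the normals; its regions are the connected components of the complement of the union of the hyperplanes, and its graph of regions $G(\mathcal{H})$ has the regions as vertices, two adjacent iff separated by exactly one hyperplane. An arrangement of rank $n$ is supersolvable if $n\le 2$, or $n\ge 3$ and $\mathcal{H}=\mathcal{H}_0\sqcup\mathcal{H}_1$ with both parts nonempty, $\mathcal{H}_0$ supersolvable of rank $n-1$, and for any distinct $H',H''\in\mathcal{H}_1$ some $H\in\mathcal{H}_0$ satisfies $H'\cap H''\subseteq H$. For a graph $H=(V,E)$ and an integer $\ell\ge1$, let $P_\ell$ be the path on $0,1,\dots,\ell$ and $H\times P_\ell$ the Cartesian product (vertex set $V\times\{0,\dots,\ell\}$, with $(x,i)\sim(y,j)$ iff ($\{x,y\}\in E$ and $i=j$) or ($x=y$ and $|i-j|=1$)). A graph $G$ is $\ell$-suspended over $H$ if $G$ is a spanning subgraph of $H\times P_\ell$ that contains all edges $\{(x,i),(x,i+1)\}$ ($x\in V$, $0\le i<\ell$) and all edges $\{(x,0),(y,0)\}$ and $\{(x,\ell),(y,\ell)\}$ for $\{x,y\}\in E$. *)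

(* Defs.v *)
From HB Require Import structures.
From mathcomp Require Import all_boot all_order all_algebra.
From mathcomp Require Import all_classical all_reals all_analysis.
Set Implicit Arguments. Unset Strict Implicit. Unset Printing Implicit Defensive.
Import Order.TTheory GRing.Theory Num.Theory numFieldTopology.Exports.
Local Open Scope classical_set_scope.
Local Open Scope ring_scope.

Section Arrangements.
Variables (R : realType) (d : nat).
Implicit Types (a b : 'rV[R]_d) (H : seq 'rV[R]_d) (C D : set 'rV[R]_d).

Definition dotv (x a : 'rV[R]_d) : R := \sum_(i < d) x 0 i * a 0 i.

Definition hyp a : set 'rV[R]_d := [set x | dotv x a = 0].

(* A hyperplane arrangement is given by a list of normal vectors;
   it is well-formed when all normals are nonzero and distinct entries
   describe distinct hyperplanes (so the list is a finite set of
   hyperplanes without repetition). *)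
Definition arrangement H : Prop :=
  (forall a, a \in H -> a != 0) /\
  (forall i j, (i < size H)%N -> (j < size H)%N -> i <> j ->
     hyp (nth 0 H i) <> hyp (nth 0 H j)).

Definition arr_rank H : nat := \rank (\matrix_(i < size H) nth 0 H i).

Definition arr_complement H : set 'rV[R]_d :=
  [set x | forall a, a \in H -> ~ hyp a x].

Definition region H C : Prop :=
  exists2 x, arr_complement H x & C = connected_component (arr_complement H) x.

Definition hyp_separates a C D : Prop :=
  exists x y, [/\ C x, D y & dotv x a * dotv y a < 0].

Definition region_adj H C D : Prop :=
  [/\ region H C, region H D &
      exists2 a, a \in H &
        hyp_separates a C D /\
        (forall b, b \in H -> hyp_separates b C D -> hyp b = hyp a)].

(* decomposition H = H0 ⊔ H1 as in the definition of supersolvability,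
   except for the supersolvability of H0 itself *)
Definition ss_split H H0 H1 : Prop :=
  [/\ perm_eq H (H0 ++ H1), H0 != [::], H1 != [::],
      arr_rank H0 = (arr_rank H).-1 &
      forall a' a'', a' \in H1 -> a'' \in H1 -> hyp a' <> hyp a'' ->
        exists2 a, a \in H0 & hyp a' `&` hyp a'' `<=` hyp a].

Inductive supersolvable : seq 'rV[R]_d -> Prop :=
| ss_low H : (arr_rank H <= 2)%N -> supersolvable H
| ss_step H H0 H1 : (3 <= arr_rank H)%N -> ss_split H H0 H1 ->
    supersolvable H0 -> supersolvable H.

End Arrangements.

(* A graph E on vertex set V x {0,...,l} is l-suspended over the graph
   (V, adj): spanning subgraph of (V,adj) x P_l containing all vertical
   edges and the two copies of (V,adj) at levels 0 and l. *)
Definition suspended (T : Type) (V : set T) (adj : T -> T -> Prop) (l : nat)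
  (E : T * nat -> T * nat -> Prop) : Prop :=
  [/\ (forall x i y j, V x -> V y -> (i <= l)%N -> (j <= l)%N ->
         E (x, i) (y, j) ->
         (adj x y /\ i = j) \/ (x = y /\ (i = j.+1 \/ j = i.+1))),
      (forall x i, V x -> (i < l)%N -> E (x, i) (x, i.+1)),
      (forall x y, V x -> V y -> adj x y -> E (x, 0%N) (y, 0%N)) &
      (forall x y, V x -> V y -> adj x y -> E (x, l) (y, l))].

(* Main.v *)
Require Import Defs.
From HB Require Import structures.
From mathcomp Require Import all_boot all_order all_algebra.
From mathcomp Require Import all_classical all_reals all_analysis.
From mathcomp Require Import ring lra.
Set Implicit Arguments. Unset Strict Implicit. Unset Printing Implicit Defensive.
Import Order.TTheory GRing.Theory Num.Theory numFieldTopology.Exports.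
Local Open Scope classical_set_scope.
Local Open Scope ring_scope.

Section Dot.
Variables (R : realType) (d : nat).
Implicit Types (x y a b : 'rV[R]_d).

Lemma dotvDl x y a : dotv (x + y) a = dotv x a + dotv y a.
Proof. by rewrite /dotv -big_split /=; apply: eq_bigr => i _; rewrite mxE mulrDl. Qed.
Lemma dotvZl k x a : dotv (k *: x) a = k * dotv x a.
Proof. by rewrite /dotv mulr_sumr; apply: eq_bigr => i _; rewrite mxE mulrA. Qed.
Lemma dotvNl x a : dotv (- x) a = - dotv x a.
Proof. by rewrite -scaleN1r dotvZl mulN1r. Qed.
Lemma dotvBl x y a : dotv (x - y) a = dotv x a - dotv y a.
Proof. by rewrite dotvDl dotvNl. Qed.
Lemma dotvC x a : dotv x a = dotv a x.
Proof. by rewrite /dotv; apply: eq_bigr => i _; rewrite mulrC. Qed.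
Lemma dotv_gt0 x : x != 0 -> 0 < dotv x x.
Proof.
move=> nz; rewrite /dotv lt_def; apply/andP; split; last first.
  by apply: sumr_ge0 => i _; rewrite -expr2 sqr_ge0.
apply: contra nz => /eqP /psumr_eq0P H; apply/eqP/rowP => j.
rewrite mxE; apply/eqP; rewrite -sqrf_eq0 expr2.
by rewrite (H _ j) // => i _; rewrite -expr2 sqr_ge0.
Qed.

Lemma hyp_sub_eq a b : a != 0 -> b != 0 -> hyp a `<=` hyp b -> hyp a = hyp b.
Proof.
move=> a0 b0 sab.
have aa := dotv_gt0 a0; have bb := dotv_gt0 b0.
have key z : dotv z b = (dotv z a / dotv a a) * dotv a b.
  have : hyp b (z - (dotv z a / dotv a a) *: a).
    apply: sab; rewrite /hyp /= dotvBl dotvZl -mulrA mulVf ?mulr1 ?subrr //.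
    by rewrite gt_eqF.
  rewrite /hyp /= dotvBl dotvZl => /eqP; rewrite subr_eq0 => /eqP ->.
  by rewrite (dotvC a b).
have ab : dotv a b != 0.
  apply/eqP => ab0; move: (key b); rewrite ab0 mulr0 => bb0.
  by move: bb; rewrite bb0 ltxx.
apply/seteqP; split => // z; rewrite /hyp /= key => /eqP.
rewrite mulf_eq0 (negbTE ab) orbF mulf_eq0 invr_eq0 (gt_eqF aa) orbF.
by move/eqP.
Qed.
End Dot.

Section Cells.
Variables (R : realType) (d : nat).
Implicit Types (x y z a b : 'rV[R]_d) (K : seq 'rV[R]_d).

Definition cell K x : set 'rV[R]_d :=
  [set y | arr_complement K y /\ forall a, a \in K -> (0 < dotv y a) = (0 < dotv x a)].

Lemma cell_refl K x : arr_complement K x -> cell K x x.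
Proof. by []. Qed.

Lemma cell_sub K x : cell K x `<=` arr_complement K.
Proof. by move=> y []. Qed.

Lemma cell_eq K x y : cell K x y -> cell K y = cell K x.
Proof.
move=> [Sy Hy]; apply/seteqP; split => z [Sz Hz]; split => // a aK.
  by rewrite Hz // Hy.
by rewrite Hz // Hy.
Qed.

Lemma sgn_comb (al be t : R) : al != 0 -> be != 0 -> (0 < al) = (0 < be) ->
  0 <= t <= 1 -> ((1 - t) * al + t * be != 0) /\ ((0 < (1 - t) * al + t * be) = (0 < al)).
Proof.
move=> a0 b0 ab /andP[t0 t1].
have [ap|an] := ltP 0 al.
  have bp : 0 < be by rewrite -ab.
  have : 0 < (1 - t) * al + t * be.
    have [le|le] := lerP al be; first nra. nra.
  by move=> h; rewrite h (gt_eqF h).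
have an' : al < 0 by rewrite lt_neqAle an andbT.
have bn : be < 0 by rewrite lt_neqAle b0 /= leNgt -ab -leNgt.
have : (1 - t) * al + t * be < 0.
  have [le|le] := lerP al be; first nra. nra.
by move=> h; rewrite (lt_eqF h) (lt_gtF h).
Qed.

Lemma cell_convex K x y z t : cell K x y -> cell K x z -> 0 <= t <= 1 ->
  cell K x ((1 - t) *: y + t *: z).
Proof.
move=> [Sy Hy] [Sz Hz] t01; split.
  move=> a aK; rewrite /hyp /= dotvDl !dotvZl.
  have y0 : dotv y a != 0 by apply/eqP; exact: Sy.
  have z0 : dotv z a != 0 by apply/eqP; exact: Sz.
  have [+ _] := sgn_comb y0 z0 (etrans (Hy a aK) (esym (Hz a aK))) t01.
  by move/eqP.
move=> a aK; rewrite dotvDl !dotvZl.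
have y0 : dotv y a != 0 by apply/eqP; exact: Sy.
have z0 : dotv z a != 0 by apply/eqP; exact: Sz.
have [_ ->] := sgn_comb y0 z0 (etrans (Hy a aK) (esym (Hz a aK))) t01.
exact: Hy.
Qed.

Lemma contD (f g : 'rV[R]_d -> R) : continuous f -> continuous g ->
  continuous (fun x => f x + g x).
Proof. by move=> cf cg x; exact: (continuousD (cf x) (cg x)). Qed.
Lemma contM (f g : 'rV[R]_d -> R) : continuous f -> continuous g ->
  continuous (fun x => f x * g x).
Proof. by move=> cf cg x; exact: (continuousM (cf x) (cg x)). Qed.

Lemma contDv (f g : R -> 'rV[R]_d) : continuous f -> continuous g ->
  continuous (fun t : R => f t + g t).
Proof. by move=> cf cg t; exact: (continuousD (cf t) (cg t)). Qed.

Lemma dotv_continuous a : continuous (fun x : 'rV[R]_d => dotv x a).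
Proof.
rewrite /dotv; elim: (index_enum _) => [|i s IH].
  under eq_fun do rewrite big_nil; exact: cst_continuous.
under eq_fun do rewrite big_cons.
apply: contD IH.
apply: (@contM (fun z : 'rV[R]_d => z 0 i) (fun=> a 0 i)); last exact: cst_continuous.
exact: (@coord_continuous R 1 d 0 i).
Qed.

Lemma open_pos a : open [set z : 'rV[R]_d | 0 < dotv z a].
Proof.
have -> : [set z : 'rV[R]_d | 0 < dotv z a] = (fun z => dotv z a) @^-1` [set r : R | 0 < r] by [].
by apply: open_comp; [move=> z _; exact: dotv_continuous|exact: open_gt].
Qed.
Lemma open_neg a : open [set z : 'rV[R]_d | dotv z a < 0].
Proof.
have -> : [set z : 'rV[R]_d | dotv z a < 0] = (fun z => dotv z a) @^-1` [set r : R | r < 0] by [].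
by apply: open_comp; [move=> z _; exact: dotv_continuous|exact: open_lt].
Qed.
Lemma closed_nneg a : closed [set z : 'rV[R]_d | 0 <= dotv z a].
Proof.
have -> : [set z : 'rV[R]_d | 0 <= dotv z a] = (fun z => dotv z a) @^-1` [set r : R | 0 <= r] by [].
by apply: preimage_closed; [move=> z _; exact: dotv_continuous|exact: closed_ge].
Qed.
Lemma closed_npos a : closed [set z : 'rV[R]_d | dotv z a <= 0].
Proof.
have -> : [set z : 'rV[R]_d | dotv z a <= 0] = (fun z => dotv z a) @^-1` [set r : R | r <= 0] by [].
by apply: preimage_closed; [move=> z _; exact: dotv_continuous|exact: closed_le].
Qed.

Lemma cell_connected K x : arr_complement K x -> connected (cell K x).
Proof.
move=> Sx.
have -> : cell K x = \bigcup_(y in cell K x)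
    ((fun t : R => x + t *: (y - x)) @` `[0, 1]).
  apply/seteqP; split => [y cy|y [z cz [t t01 <-]]].
    exists y => //; exists 1; first by rewrite set_itvcc /= lexx ler01.
    by rewrite scale1r addrC subrK.
  have -> : x + t *: (z - x) = (1 - t) *: x + t *: z.
    by rewrite scalerBr scalerBl scale1r addrA addrAC.
  by apply: cell_convex => //; move: t01; rewrite set_itvcc.
apply: bigcup_connected.
  exists x => y cy; exists 0; first by rewrite set_itvcc /= lexx ler01.
  by rewrite scale0r addr0.
move=> y cy; apply: connected_continuous_connected; first exact: segment_connected.
apply: continuous_subspaceT.
apply: (@contDv (fun=> x) (fun t => t *: (y - x))); first exact: cst_continuous.
exact: scalel_continuous.
Qed.

Lemma comp_cell K x : arr_complement K x ->
  connected_component (arr_complement K) x = cell K x.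
Proof.
move=> Sx; apply/seteqP; split; last first.
  apply: connected_component_max => //; [exact: cell_sub|exact: cell_connected].
move=> y Qy; split; first exact: connected_component_sub Qy.
move=> a aK.
set Q := connected_component (arr_complement K) x.
have QS : Q `<=` arr_complement K by exact: connected_component_sub.
have Qne z : Q z -> dotv z a != 0 by move=> /QS /(_ a aK) h; apply/eqP.
set B := Q `&` [set z | (0 < dotv z a) = (0 < dotv x a)].
suff eBQ : B = Q by have [] : B y by rewrite eBQ.
apply: component_connected.
- by exists x; split => //; exact: connected_component_refl.
- case: (boolP (0 < dotv x a)) => xa.
    exists [set z | 0 < dotv z a].
      exact: open_pos.
    by apply/seteqP; split => z [Qz hz]; split => //=; [rewrite hz|rewrite hz].
  exists [set z | dotv z a < 0].
    exact: open_neg.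
  apply/seteqP; split => z [Qz hz]; split => //=.
    by rewrite lt_neqAle (Qne _ Qz) /= leNgt hz.
  by rewrite (lt_gtF hz) (negbTE xa).
- case: (boolP (0 < dotv x a)) => xa.
    exists [set z | 0 <= dotv z a].
      exact: closed_nneg.
    apply/seteqP; split => z [Qz hz]; split => //=.
      by move: hz; rewrite xa => /ltW.
    by rewrite xa lt_neqAle eq_sym (Qne _ Qz).
  exists [set z | dotv z a <= 0].
    exact: closed_npos.
  apply/seteqP; split => z [Qz hz]; split => //=.
    by rewrite leNgt hz.
  by rewrite (negbTE xa) ltNge hz.
Qed.

Lemma regionP K C : region K C <-> exists2 x, arr_complement K x & C = cell K x.
Proof.
split => [[x Sx ->]|[x Sx ->]]; exists x => //; by rewrite comp_cell.
Qed.

Lemma sepP K x y b : arr_complement K x -> arr_complement K y -> b \in K ->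
  hyp_separates b (cell K x) (cell K y) <-> (0 < dotv x b) != (0 < dotv y b).
Proof.
move=> Sx Sy bK; split.
  move=> [u [w [[Su Hu] [Sw Hw] neg]]].
  rewrite -(Hu b bK) -(Hw b bK).
  have [up|un] := ltP 0 (dotv u b).
    by rewrite (pmulr_rlt0 _ up) in neg; rewrite (lt_gtF neg).
  have un' : dotv u b < 0 by rewrite lt_neqAle un andbT; apply/eqP; exact: Su.
  by rewrite (nmulr_rlt0 _ un') in neg; rewrite neg.
move=> ne; exists x, y; split => //.
have x0 : dotv x b != 0 by apply/eqP; exact: Sx.
have y0 : dotv y b != 0 by apply/eqP; exact: Sy.
have [xp|xn] := ltP 0 (dotv x b).
  have yn : ~~ (0 < dotv y b) by move: ne; rewrite xp; case: (0 < dotv y b).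
  by rewrite (pmulr_rlt0 _ xp) lt_neqAle y0 /= leNgt.
have xn' : dotv x b < 0 by rewrite lt_neqAle xn andbT.
have yp : 0 < dotv y b by move: ne; rewrite (le_gtF xn); case: (0 < dotv y b).
by rewrite (nmulr_rlt0 _ xn').
Qed.
End Cells.
Section Counting.
Variable T : eqType.
Implicit Types (s : seq T) (p q : pred T).

Lemma cnt_le s p q : (forall x, x \in s -> q x -> p x) -> (count q s <= count p s)%N.
Proof.
elim: s => [//|x s IH] sub /=; apply: leq_add.
  by case: (boolP (q x)) => // /(sub x (mem_head _ _)) ->.
by apply: IH => y ys; apply: sub; rewrite inE ys orbT.
Qed.

Lemma cnt_lt s p q x0 : (forall x, x \in s -> q x -> p x) -> x0 \in s -> p x0 -> ~~ q x0 ->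
  (count q s < count p s)%N.
Proof.
elim: s => [//|x s IH] sub; rewrite inE => /orP[/eqP ->|xs] px0 qx0.
  rewrite /= px0 (negbTE qx0) add0n add1n ltnS.
  by apply: cnt_le => y ys; apply: sub; rewrite inE ys orbT.
rewrite /=; have := IH (fun y ys => sub y (mem_behead (s := x :: s) ys)) xs px0 qx0.
have : (q x <= p x)%N by case: (boolP (q x)) => // /(sub x (mem_head _ _)) ->.
move=> a b; rewrite -addnS; exact: leq_add a b.
Qed.

Lemma cnt_split s p q : (forall x, x \in s -> q x -> p x) ->
  count p s = (count q s + count (fun x => p x && ~~ q x) s)%N.
Proof.
elim: s => [//|x s IH] sub /=.
rewrite IH; last by move=> y ys; apply: sub; rewrite inE ys orbT.
have := sub x (mem_head _ _).
case: (p x); case: (q x) => //= H; first by rewrite add0n addnCA.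
by have := H isT.
Qed.

Lemma cnt_two s (r : pred T) x y : x \in s -> y \in s -> x != y -> r x -> r y -> (2 <= count r s)%N.
Proof.
elim: s => [//|z s IH]; rewrite !inE => /orP[/eqP xz|xs] /orP[/eqP yz|ys] nxy rx ry.
- by move: nxy; rewrite xz yz eqxx.
- rewrite /= -xz rx add1n ltnS -has_count; apply/hasP; by exists y.
- rewrite /= -yz ry add1n ltnS -has_count; apply/hasP; by exists x.
- by rewrite /=; apply: leq_trans (IH xs ys nxy rx ry) _; exact: leq_addl.
Qed.

Lemma cnt_one s p q a : uniq s -> a \in s -> (forall x, x \in s -> x != a -> p x = q x) ->
  p a != q a -> count p s = (count q s).+1 \/ count q s = (count p s).+1.
Proof.
elim: s => [//|x s IH] /= /andP[xs us]; rewrite inE => /orP[/eqP ax|as_] E pq.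
  subst x.
  have -> : count p s = count q s.
    apply: eq_in_count => y ys; apply: E; first by rewrite inE ys orbT.
    by apply: contraNneq xs => <-.
  by move: pq; case: (p a); case: (q a) => //= _; [left|right]; rewrite add0n.
have pqx : p x = q x.
  apply: E; first exact: mem_head.
  by apply: contraNneq xs => ->.
have := IH us as_ (fun y ys => E y (mem_behead (s := x :: s) ys)) pq.
by rewrite pqx => -[->|->]; [left|right]; rewrite addnS.
Qed.
End Counting.

Section Levels.
Variable R : realType.

Lemma sorted_levels (s : seq R) : sorted <%R s -> forall b, (forall x, x \in s -> b < x) ->
  forall i, (i <= size s)%N -> exists t, [/\ t \notin s, b < t & count (fun x => x < t) s = i].
Proof.
elim: s => [|m s IH] srt b bs i.
  rewrite leqn0 => /eqP ->; exists (b + 1); split => //; lra.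
have ms : forall x, x \in s -> m < x.
  move=> x xs; have := order_path_min (@lt_trans _ R) srt.
  by move/allP; apply.
have srt' : sorted <%R s by exact: path_sorted srt.
have bm : b < m by apply: bs; exact: mem_head.
case: i => [_|i].
  exists ((b + m) / 2); split.
  - rewrite inE negb_or; apply/andP; split.
      by rewrite lt_eqF //; lra.
    apply/negP => /ms; lra.
  - lra.
  - apply/eqP; rewrite -leqn0 leqNgt -has_count; apply/hasP => -[x /[1!inE] /orP[/eqP ->|xs]].
      lra.
    by move/ms: xs; lra.
rewrite /= ltnS => isz.
have [t [ts mt ct]] := IH srt' m ms i isz.
exists t; split.
- by rewrite inE negb_or ts andbT gt_eqF.
- exact: lt_trans bm mt.
- by rewrite /= mt ct.
Qed.

Lemma uniq_levels (T : seq R) : uniq T -> forall i, (i <= size T)%N ->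
  exists t, t \notin T /\ count (fun x => x < t) T = i.
Proof.
move=> uT i iT.
set s := sort <=%O T.
have ps : perm_eq s T by rewrite perm_sort.
have srt : sorted <%R s by rewrite sort_lt_sorted.
have [b bs] : exists b, forall x, x \in s -> b < x.
  exists (- (\sum_(x <- s) `|x|) - 1) => x xs.
  have h1 : `|x| <= \sum_(y <- s) `|y|.
    rewrite (big_rem x xs) /= lerDl; exact: sumr_ge0.
  have h2 : - x <= `|x| by rewrite -normrN ler_norm.
  lra.
have [|t [ts _ ct]] := sorted_levels srt bs (i := i); first by rewrite (perm_size ps).
by exists t; split; [rewrite -(perm_mem ps)|rewrite -(permP ps)].
Qed.
End Levels.

Section Main.
Variables (R : realType) (d : nat) (H H0 H1 : seq 'rV[R]_d).
Hypothesis arrH : arrangement H.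
Hypothesis permH : perm_eq H (H0 ++ H1).
Hypothesis modH : forall a' a'', a' \in H1 -> a'' \in H1 -> hyp a' <> hyp a'' ->
  exists2 a, a \in H0 & hyp a' `&` hyp a'' `<=` hyp a.
Variable v : 'rV[R]_d.
Hypothesis vH0 : forall a, a \in H0 -> dotv v a = 0.
Hypothesis vH1 : forall h, h \in H1 -> dotv v h != 0.

Lemma uniqH : uniq H.
Proof.
apply/negP => /negP /(uniqPn 0) [i [j [ij jH eq]]].
case: arrH => _ /(_ i j (ltn_trans ij jH) jH) h; apply: h; last by rewrite eq.
by move=> e; move: ij; rewrite e ltnn.
Qed.

Lemma hyp_inj a b : a \in H -> b \in H -> hyp a = hyp b -> a = b.
Proof.
move=> aH bH e; apply/eqP; apply/negP => /negP nab.
case: arrH => _ /(_ (index a H) (index b H)); rewrite !index_mem => /(_ aH bH) h.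
apply: h; last by rewrite !nth_index.
by move/(congr1 (nth 0 H)); rewrite !nth_index //; move/eqP; rewrite (negbTE nab).
Qed.

Lemma memH0 a : a \in H0 -> a \in H.
Proof. by move=> aH; rewrite (perm_mem permH) mem_cat aH. Qed.
Lemma memH1 a : a \in H1 -> a \in H.
Proof. by move=> aH; rewrite (perm_mem permH) mem_cat aH orbT. Qed.
Lemma memH a : a \in H -> a \in H0 \/ a \in H1.
Proof. by rewrite (perm_mem permH) mem_cat => /orP. Qed.

Lemma uniq01 : uniq (H0 ++ H1).
Proof. by rewrite -(perm_uniq permH) uniqH. Qed.

Lemma disj a : a \in H0 -> a \in H1 -> False.
Proof.
move=> a0 a1; have := uniq01; rewrite cat_uniq => /and3P[_ /hasPn /(_ a a1) + _].
by rewrite a0.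
Qed.

Lemma uniqH1 : uniq H1.
Proof. by have := uniq01; rewrite cat_uniq => /and3P[]. Qed.

Lemma nzH a : a \in H -> a != 0.
Proof. by case: arrH => h _; exact: h. Qed.

Local Notation S := (arr_complement H).
Local Notation S0 := (arr_complement H0).

Lemma SS0 x : S x -> S0 x.
Proof. by move=> Sx a /memH0; exact: Sx. Qed.

Lemma Sne x a : S x -> a \in H -> dotv x a != 0.
Proof. by move=> Sx aH; apply/eqP; exact: Sx. Qed.
Lemma S0ne x a : S0 x -> a \in H0 -> dotv x a != 0.
Proof. by move=> Sx aH; apply/eqP; exact: Sx. Qed.

Lemma S_of x : S0 x -> (forall h, h \in H1 -> dotv x h != 0) -> S x.
Proof.
move=> S0x nz a /memH [a0|a1]; first exact: S0x.
by move=> /eqP; apply/negP; exact: nz.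
Qed.

Definition tau h y := dotv y h / dotv v h.
Definition L y h := (0 < dotv y h) == (0 < dotv v h).
Definition lev y := count (L y) H1.

Lemma dotv_tau y h : h \in H1 -> dotv y h = tau h y * dotv v h.
Proof. by move=> hH; rewrite /tau mulfVK // vH1. Qed.

Lemma tau_ne0 y h : h \in H1 -> dotv y h != 0 -> tau h y != 0.
Proof. by move=> hH nz; rewrite /tau mulf_neq0 // invr_neq0 // vH1. Qed.

Lemma L_tau y h : h \in H1 -> dotv y h != 0 -> L y h = (0 < tau h y).
Proof.
move=> hH nz; rewrite /L /tau.
have nv := vH1 hH.
have [vp|vn] := ltP 0 (dotv v h).
  by rewrite pmulr_lgt0 ?invr_gt0 // eqb_id.
have vn' : dotv v h < 0 by rewrite lt_neqAle nv.
rewrite nmulr_lgt0 ?invr_lt0 // eqbF_neg.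
have [yp|yn] := ltP 0 (dotv y h); first by rewrite (lt_gtF yp).
by rewrite lt_neqAle nz yn.
Qed.

Lemma tau_shift y t h : h \in H1 -> tau h (y + t *: v) = tau h y + t.
Proof. by move=> hH; rewrite /tau dotvDl dotvZl mulrDl mulfK // vH1. Qed.

Lemma tau_comb y z s h : tau h ((1 - s) *: y + s *: z) = (1 - s) * tau h y + s * tau h z.
Proof. by rewrite /tau dotvDl !dotvZl mulrDl !mulrA. Qed.

Lemma tau_neq u h h' : S0 u -> h \in H1 -> h' \in H1 -> h != h' -> tau h u != tau h' u.
Proof.
move=> Su hH h'H nhh; apply/eqP => e.
have [a aH0 sub] := modH hH h'H (fun E => negP nhh (introT eqP (hyp_inj (memH1 hH) (memH1 h'H) E))).
set t := - tau h u.
have p1 : hyp h (u + t *: v).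
  by rewrite /hyp /= (dotv_tau _ hH) tau_shift // /t subrr mul0r.
have p2 : hyp h' (u + t *: v).
  by rewrite /hyp /= (dotv_tau _ h'H) tau_shift // /t e subrr mul0r.
have := sub _ (conj p1 p2); rewrite /hyp /= dotvDl dotvZl vH0 // mulr0 addr0.
exact: Su.
Qed.

Lemma order_const y z h h' : S0 y -> cell H0 y z -> h \in H1 -> h' \in H1 -> h != h' ->
  tau h y < tau h' y -> tau h z < tau h' z.
Proof.
move=> Sy cz hH h'H nhh lty.
have Sz : S0 z by case: cz.
have nez := tau_neq Sz hH h'H nhh.
case: (ltgtP (tau h z) (tau h' z)) => [//|gtz|eqz]; last by rewrite eqz eqxx in nez.
exfalso.
set gy := tau h y - tau h' y; set gz := tau h z - tau h' z.
have gyn : gy < 0 by rewrite /gy subr_lt0.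
have gzp : 0 < gz by rewrite /gz subr_gt0.
have Dn : gy - gz < 0 by lra.
set s := gy / (gy - gz).
have sD : s * (gy - gz) = gy by rewrite /s mulfVK // lt_eqF.
have s0 : 0 <= s by nra.
have s1 : s <= 1 by nra.
have cu : cell H0 y ((1 - s) *: y + s *: z).
  by apply: (cell_convex (cell_refl Sy) cz); rewrite s0 s1.
have := tau_neq (proj1 cu) hH h'H nhh.
rewrite !tau_comb; apply/negP/negPn/eqP.
have : (1 - s) * gy + s * gz = 0 by lra.
rewrite /gy /gz; lra.
Qed.

Lemma tau_pos_neg y h : h \in H1 -> S y -> ~~ L y h -> tau h y < 0.
Proof.
move=> hH Sy; rewrite (L_tau hH (Sne Sy (memH1 hH))) => np.
have := tau_ne0 hH (Sne Sy (memH1 hH)).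
by rewrite lt_neqAle leNgt np andbT.
Qed.

Lemma count_incl y z : S y -> S z -> cell H0 y z -> (lev y <= lev z)%N ->
  forall h, h \in H1 -> L y h -> L z h.
Proof.
move=> Sy Sz cz le h hH Lyh; apply/negP => nLzh.
have [h' [h'H Lzh' nLyh']] : exists h', [/\ h' \in H1, L z h' & ~~ L y h'].
  apply: contrapT => nex.
  have lt : (lev z < lev y)%N.
    apply: (@cnt_lt _ H1 (L y) (L z) h) => //; last exact/negP.
    move=> x xH Lzx; apply: contrapT => nLyx; apply: nex.
    by exists x; split => //; apply/negP.
  by move: lt; rewrite ltnNge le.
have nhh : h' != h by apply: contraNneq nLyh' => ->.
have t1 : tau h' y < tau h y.
  have := tau_pos_neg h'H Sy nLyh'.
  by rewrite (L_tau hH (Sne Sy (memH1 hH))) in Lyh; move=> a; exact: lt_trans a Lyh.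
have := order_const (SS0 Sy) cz h'H hH nhh t1.
have := tau_pos_neg hH Sz (introN idP nLzh).
by rewrite (L_tau h'H (Sne Sz (memH1 h'H))) in Lzh'; move=> a b; move: (lt_trans b a); rewrite ltNge (ltW Lzh').
Qed.

Lemma cell_sym (K : seq 'rV[R]_d) (x y : 'rV[R]_d) : arr_complement K x -> cell K x y -> cell K y x.
Proof. by move=> Sx cy; rewrite (cell_eq cy); exact: cell_refl. Qed.

Lemma lev_eq y z : S y -> S z -> cell H0 y z -> lev y = lev z ->
  forall h, h \in H1 -> L y h = L z h.
Proof.
move=> Sy Sz cz e h hH; apply/idP/idP.
  by apply: count_incl => //; rewrite e.
by apply: count_incl => //; [exact: cell_sym (SS0 Sy) cz|rewrite e].
Qed.

Lemma L_sgn y z h : L y h = L z h -> (0 < dotv y h) = (0 < dotv z h).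
Proof. by rewrite /L; case: (0 < dotv y h); case: (0 < dotv z h); case: (0 < dotv v h). Qed.

Lemma sgn_L y z h : (0 < dotv y h) = (0 < dotv z h) -> L y h = L z h.
Proof. by rewrite /L => ->. Qed.

Lemma lev_exists x0 i : S0 x0 -> (i <= size H1)%N ->
  exists y, [/\ S y, cell H0 x0 y & lev y = i].
Proof.
move=> Sx0 iH.
set T := map (fun h => - tau h x0) H1.
have uT : uniq T.
  rewrite map_inj_in_uniq ?uniqH1 // => h h' hH h'H /eqP; rewrite eqr_opp => /eqP e.
  case: (eqVneq h h') => // nhh; by move: (tau_neq Sx0 hH h'H nhh); rewrite e eqxx.
have [|t [tT ct]] := @uniq_levels _ T uT i.
  by rewrite size_map.
set y := x0 + t *: v.
have tne h : h \in H1 -> tau h y != 0.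
  move=> hH; rewrite tau_shift //; apply: contraNneq tT => e.
  apply/mapP; exists h => //; lra.
have S0y : S0 y.
  by move=> a aH; rewrite /hyp /= dotvDl dotvZl vH0 // mulr0 addr0; exact: Sx0.
have Sy : S y.
  apply: S_of => // h hH; rewrite (dotv_tau _ hH) mulf_neq0 //; [exact: tne|exact: vH1].
exists y; split => //.
  split => // a aH; by rewrite dotvDl dotvZl vH0 // mulr0 addr0.
rewrite /lev -ct /T count_map; apply: eq_in_count => h hH /=.
rewrite (L_tau hH (Sne Sy (memH1 hH))) tau_shift //.
by rewrite -[in RHS]subr_gt0 opprK addrC.
Qed.


Definition pick (C : set 'rV[R]_d) (i : nat) : 'rV[R]_d :=
  match pselect (exists y, [/\ S y, C y & lev y = i]) with
  | left P => proj1_sig (cid P) | right _ => 0 end.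

Lemma pickP C i : (exists y, [/\ S y, C y & lev y = i]) ->
  [/\ S (pick C i), C (pick C i) & lev (pick C i) = i].
Proof. by rewrite /pick; case: pselect => // P _; exact: (proj2_sig (cid P)). Qed.

Lemma pick_reg C i : region H0 C -> (i <= size H1)%N ->
  [/\ S (pick C i), C = cell H0 (pick C i) & lev (pick C i) = i].
Proof.
move=> /regionP [x0 Sx0 ->] iH.
have [y [Sy cy ly]] := lev_exists Sx0 iH.
have [Sp cp lp] := pickP (ex_intro _ y (And3 Sy cy ly)).
by split => //; rewrite (cell_eq cp).
Qed.

Lemma adj_lift y z : S y -> S z -> (forall h, h \in H1 -> L y h = L z h) ->
  region_adj H0 (cell H0 y) (cell H0 z) -> region_adj H (cell H y) (cell H z).
Proof.
move=> Sy Sz Lyz [_ _ [a a0 [sep0 uni0]]].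
split; [by apply/regionP; exists y|by apply/regionP; exists z|].
have aH := memH0 a0.
exists a => //; split.
  by apply/(sepP Sy Sz aH); apply/(sepP (SS0 Sy) (SS0 Sz) a0).
move=> b bH /(sepP Sy Sz bH) ne; case: (memH bH) => [b0|b1].
  by apply: uni0 => //; apply/(sepP (SS0 Sy) (SS0 Sz) b0).
by move: ne; rewrite (L_sgn (Lyz b b1)) eqxx.
Qed.

Lemma main_sec : exists f : set 'rV[R]_d * nat -> set 'rV[R]_d,
    [/\ (forall C i, region H0 C -> (i <= size H1)%N -> region H (f (C, i))),
        (forall C i D j, region H0 C -> (i <= size H1)%N ->
           region H0 D -> (j <= size H1)%N ->
           f (C, i) = f (D, j) -> C = D /\ i = j),
        (forall D, region H D ->
           exists2 C, region H0 C & exists2 i, (i <= size H1)%N & D = f (C, i)) &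
        suspended (region H0) (region_adj H0) (size H1)
          (fun u v => region_adj H (f u) (f v))].
Proof.
exists (fun p => cell H (pick p.1 p.2)); split.
- move=> C i rC iH /=; have [Sp _ _] := pick_reg rC iH.
  by apply/regionP; exists (pick C i).
- move=> C i D j rC iH rD jH /= e.
  have [Sy eC ly] := pick_reg rC iH; have [Sz eD lz] := pick_reg rD jH.
  set y := pick C i in Sy eC ly e; set z := pick D j in Sz eD lz e.
  have [_ hz] : cell H y z by rewrite e; exact: cell_refl.
  have cz : cell H0 y z by split; [exact: SS0|move=> a a0; exact: hz (memH0 a0)].
  split; first by rewrite eC eD (cell_eq cz).
  rewrite -ly -lz; apply: eq_in_count => h hH; apply: sgn_L.
  by rewrite hz // memH1.
- move=> D /regionP [y Sy ->].
  exists (cell H0 y); first by apply/regionP; exists y => //; exact: SS0.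
  exists (lev y); first exact: count_size.
  have [Sz cz lz] := pickP (ex_intro _ y (And3 Sy (cell_refl (SS0 Sy)) erefl)).
  set z := pick _ _ in Sz cz lz *; rewrite /=.
  apply/esym/cell_eq; split => // a aH; case: (memH aH) => [a0|a1].
    by case: cz => _ /(_ a a0).
  by apply: L_sgn; apply/esym; apply: lev_eq => //; rewrite lz.
- split.
  + move=> C i D j rC rD iH jH /= adj.
    have [Sy eC ly] := pick_reg rC iH; have [Sz eD lz] := pick_reg rD jH.
    set y := pick C i in Sy eC ly adj; set z := pick D j in Sz eD lz adj.
    case: adj => _ _ [a aH [/(sepP Sy Sz aH) nea uni]].
    have same b : b \in H -> b != a -> (0 < dotv y b) = (0 < dotv z b).
      move=> bH nba; apply: contraNeq nba => nb; apply/eqP.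
      by apply: hyp_inj => //; apply: uni => //; apply/(sepP Sy Sz bH).
    case: (memH aH) => [a0|a1].
    * left; split; last first.
        rewrite -ly -lz; apply: eq_in_count => h hH; apply: sgn_L; apply: same.
          exact: memH1.
        by apply: contraTneq hH => ->; apply/negP => /(disj a0).
      rewrite eC eD; split; [by apply/regionP; exists y => //; exact: SS0
                            |by apply/regionP; exists z => //; exact: SS0|].
      exists a => //; split; first by apply/(sepP (SS0 Sy) (SS0 Sz) a0).
      move=> b b0 /(sepP (SS0 Sy) (SS0 Sz) b0) nb; apply: uni; first exact: memH0.
      by apply/(sepP Sy Sz (memH0 b0)).
    * right; split.
        rewrite eC eD; apply/esym/cell_eq; split; first exact: SS0.
        move=> b b0; apply/esym; apply: same; first exact: memH0.
        by apply: contraTneq b0 => ->; apply/negP => /disj /(_ a1).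
      have : L y a != L z a by apply: contra nea => /eqP /L_sgn ->.
      move=> /(cnt_one uniqH1 a1) => /(_ (fun x xH nxa => sgn_L (same x (memH1 xH) nxa))).
      rewrite -/(lev y) -/(lev z) ly lz => -[->|->]; [left|right] => //.
  + move=> C i rC ilt.
    have iH : (i <= size H1)%N by exact: ltnW.
    have [Sy eC ly] := pick_reg rC iH; have [Sz eD lz] := pick_reg rC ilt.
    set y := pick C i in Sy eC ly *; set z := pick C i.+1 in Sz eD lz *.
    have cz : cell H0 y z by rewrite -eC eD; exact: cell_refl (SS0 Sz).
    have lyz : (lev y <= lev z)%N by rewrite ly lz.
    have incl := count_incl Sy Sz cz lyz.
    have [h [hH Lzh nLyh]] : exists h, [/\ h \in H1, L z h & ~~ L y h].
      apply: contrapT => nex.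
      have : (lev z <= lev y)%N.
        apply: cnt_le => x xH Lzx; apply: contrapT => nLyx; apply: nex.
        by exists x; split => //; apply/negP.
      by rewrite ly lz ltnn.
    split; [by apply/regionP; exists y|by apply/regionP; exists z|].
    exists h; first exact: memH1.
    split.
      apply/(sepP Sy Sz (memH1 hH)); apply: contraNneq nLyh => /sgn_L ->.
      exact: Lzh.
    move=> b bH /(sepP Sy Sz bH) nb; case: (memH bH) => [b0|b1].
      by case: cz => _ /(_ b b0) e; rewrite e eqxx in nb.
    have nLb : L y b != L z b by apply: contra nb => /eqP /L_sgn ->.
    have nLyb : ~~ L y b by apply/negP => Lyb; move: nLb; rewrite Lyb (incl b b1 Lyb).
    have Lzb : L z b by move: nLb; rewrite (negbTE nLyb); case: (L z b).
    case: (eqVneq b h) => [-> //|nbh].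
    have := cnt_split (incl) ; rewrite -/(lev y) -/(lev z) ly lz.
    have := @cnt_two _ H1 (fun x => L z x && ~~ L y x) b h b1 hH nbh.
    rewrite /= Lzb nLyb Lzh nLyh => /(_ isT isT) two.
    move=> e; move: two; rewrite -addn1 in e; move: e => /eqP; rewrite eqn_add2l => /eqP <-//.
  + move=> C D rC rD adj /=.
    have [Sy eC ly] := pick_reg rC (leq0n _); have [Sz eD lz] := pick_reg rD (leq0n _).
    rewrite eC eD in adj; apply: adj_lift => // h hH.
    have f0 x : lev x = 0%N -> L x h = false.
      move=> l0; apply/negP => Lxh.
      rewrite /lev in l0.
      by have := @has_count _ (L x) H1; rewrite l0 /= => /hasPn /(_ h hH); rewrite Lxh.
    by rewrite f0 // f0.
  + move=> C D rC rD adj /=.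
    have [Sy eC ly] := pick_reg rC (leqnn _); have [Sz eD lz] := pick_reg rD (leqnn _).
    rewrite eC eD in adj; apply: adj_lift => // h hH.
    have f1 x : lev x = size H1 -> L x h.
      by move=> l1; have := all_count (L x) H1; rewrite /lev in l1; rewrite l1 eqxx => /allP; apply.
    by rewrite f1 // f1.
Qed.

End Main.

Section Vex.
Variables (R : realType) (d : nat) (H H0 H1 : seq 'rV[R]_d).
Hypothesis arrH : arrangement H.
Hypothesis permH : perm_eq H (H0 ++ H1).
Hypothesis modH : forall a' a'', a' \in H1 -> a'' \in H1 -> hyp a' <> hyp a'' ->
  exists2 a, a \in H0 & hyp a' `&` hyp a'' `<=` hyp a.

Lemma w_nz (w : 'rV[R]_d) h1 : (forall a, a \in H0 -> dotv w a = 0) -> h1 \in H1 ->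
  dotv w h1 != 0 -> forall h, h \in H1 -> dotv w h != 0.
Proof.
move=> w0 h1H w1 h hH; apply/eqP => wh.
have nh : h != h1 by apply: contraTneq w1 => <-; rewrite wh eqxx.
have [a a0 sub] := modH hH h1H
  (fun E => negP nh (introT eqP (hyp_inj arrH (memH1 permH hH) (memH1 permH h1H) E))).
have sa : hyp h `<=` hyp a.
  move=> y; rewrite /hyp /= => yh.
  set t := - (dotv y h1 / dotv w h1).
  have p1 : hyp h (y + t *: w) by rewrite /hyp /= dotvDl dotvZl wh mulr0 addr0.
  have p2 : hyp h1 (y + t *: w).
    by rewrite /hyp /= dotvDl dotvZl /t mulNr mulfVK // subrr.
  have := sub _ (conj p1 p2); rewrite /hyp /= dotvDl dotvZl w0 // mulr0 addr0.
  done.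
have e := hyp_sub_eq (nzH arrH (memH1 permH hH)) (nzH arrH (memH0 permH a0)) sa.
have := hyp_inj arrH (memH1 permH hH) (memH0 permH a0) e.
by move=> eha; apply: (disj arrH permH a0); rewrite -eha.
Qed.

Definition M0 := \matrix_(i < size H0) nth 0 H0 i.
Definition MH := \matrix_(i < size H) nth 0 H i.

Lemma memM0 a : a \in H0 -> (a <= M0)%MS.
Proof.
move=> aH; have k : (index a H0 < size H0)%N by rewrite index_mem.
have -> : a = row (Ordinal k) M0 by apply/rowP => j; rewrite !mxE /= nth_index.
exact: row_sub.
Qed.

Lemma v_exists : arr_rank H0 = (arr_rank H).-1 -> (0 < arr_rank H)%N ->
  exists v : 'rV[R]_d, (forall a, a \in H0 -> dotv v a = 0) /\
                       (forall h, h \in H1 -> dotv v h != 0).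
Proof.
move=> rk rpos.
have [h1 [h1H nh1]] : exists h1, h1 \in H1 /\ ~~ (h1 <= M0)%MS.
  apply: contrapT => nex.
  have : (MH <= M0)%MS.
    apply/row_subP => i.
    have -> : row i MH = nth 0 H i by apply/rowP => j; rewrite !mxE.
    have := mem_nth 0 (ltn_ord i); move=> /(memH permH) [a0|a1]; first exact: memM0.
    by apply: contrapT => nle; apply: nex; exists (nth 0 H i); split => //; apply/negP.
  move/mxrankS; rewrite -/(arr_rank H0) -/(arr_rank H) rk.
  by case: (arr_rank H) rpos => // n _ /=; rewrite ltnn.
move: (nh1); rewrite submxE => nz.
have [j nzj] : exists j, (h1 *m cokermx M0) 0 j != 0.
  apply: contrapT => nex; apply: (negP nz); apply/eqP/rowP => j.
  rewrite [RHS]mxE; apply/eqP; apply: contrapT => nj; apply: nex; exists j; exact/negP.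
set v := \row_k cokermx M0 k j.
have dv a : dotv v a = (a *m cokermx M0) 0 j.
  rewrite /dotv !mxE; apply: eq_bigr => k _; by rewrite mxE mulrC.
have v0 a : a \in H0 -> dotv v a = 0.
  by move=> aH; rewrite dv; move: (memM0 aH); rewrite submxE => /eqP ->; rewrite mxE.
exists v; split => //.
apply: (w_nz v0 h1H); by rewrite dv.
Qed.
End Vex.

Unset Implicit Arguments.
Theorem lemma3p1 (R : realType) (d : nat) (H H0 H1 : seq 'rV[R]_d) :
  arrangement H ->
  (3 <= arr_rank H)%N ->
  ss_split H H0 H1 ->
  supersolvable H0 ->
  exists f : set 'rV[R]_d * nat -> set 'rV[R]_d,
    [/\ (forall C i, region H0 C -> (i <= size H1)%N -> region H (f (C, i))),
        (forall C i D j, region H0 C -> (i <= size H1)%N ->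
           region H0 D -> (j <= size H1)%N ->
           f (C, i) = f (D, j) -> C = D /\ i = j),
        (forall D, region H D ->
           exists2 C, region H0 C & exists2 i, (i <= size H1)%N & D = f (C, i)) &
        suspended (region H0) (region_adj H0) (size H1)
          (fun u v => region_adj H (f u) (f v))].
Proof.
move=> arrH rk3 [permH _ _ rk modH] _.
have [v [vH0 vH1]] := v_exists arrH permH modH rk (leq_trans (isT : (0 < 3)%N) rk3).
exact: (main_sec arrH permH modH vH0 vH1).
Qed.
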